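(* $\mathcal{S}=\mathcal{F}(0)\supseteq\mathcal{F}(1)\supseteq\mathcal{F}(2)\supseteq\cdots\supseteq\mathcal{F}(\bar{k})=\mathcal{F}$.
   Context: Data: $d^2\in\mathbb{Q}^{n_2}$; $A^1\in\mathbb{Q}^{m_1\times n_1}$, $G^1\in\mathbb{Q}^{m_1\times n_2}$, $b^1\in\mathbb{Q}^{m_1}$; $A^2\in\mathbb{Q}^{m_2\times n_1}$, $G^2\in\mathbb{Q}^{m_2\times n_2}$, $b^2\in\mathbb{Q}^{m_2}$; integers $0\le r_1\le n_1$, $0\le r_2\le n_2$. Let $X=\mathbb{Z}_+^{r_1}\times\mathbb{R}_+^{n_1-r_1}$, $Y=\mathbb{Z}_+^{r_2}\times\mathbb{R}_+^{n_2-r_2}$, $\mathcal{P}_1(x)=\{y\in\mathbb{R}_+^{n_2}: G^1y\ge b^1-A^1x\}$, $\mathcal{P}_2(x)=\{y\in\mathbb{R}_+^{n_2}: G^2y\ge b^2-A^2x\}$, $\mathcal{P}=\{(x,y)\in\mathbb{R}_+^{n_1}\times\mathbb{R}_+^{n_2}: y\in\mathcal{P}_1(x)\cap\mathcal{P}_2(x)\}$, $\mathcal{S}=\mathcal{P}\cap(X\times Y)$. Standing assumptions: $\mathcal{P}$ is bounded; leader variables appearing in the follower's constraints are integer; $A^2x+G^2y-b^2\in\mathbb{Z}^{m_2}$ for all $(x,y)\in\mathcal{S}$ and $d^2\in\mathbb{Z}^{n_2}$. For $x\in X$ let $\mathcal{S}(x)=Y\cap\mathcal{P}_1(x)\cap\mathcal{P}_2(x)$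 and $\mathcal{R}(x)=\{y\in\mathcal{S}(x): d^2y\le d^2\bar{y}\ \forall\bar{y}\in\mathcal{S}(x)\}$; $\mathcal{F}=\{(x,y): x\in X,\ y\in\mathcal{R}(x)\}$. For $y\in Y$ and integer $k\ge0$, $\mathcal{N}_k(y)=\{\bar{y}\in Y:\|\bar{y}-y\|_1\le k\}$, $\mathcal{R}(x;k)=\{y\in\mathcal{S}(x): d^2y\le d^2\bar{y}\ \forall\bar{y}\in\mathcal{N}_k(y)\cap\mathcal{S}(x)\}$, and $\mathcal{F}(k)=\{(x,y): x\in X,\ y\in\mathcal{R}(x;k)\}$. Finally $\bar{k}=\sum_{i=1}^{r_2}\left(\left\lfloor\max_{(x,y)\in\mathcal{P}}y_i\right\rfloor-\left\lceil\min_{(x,y)\in\mathcal{P}}y_i\right\rceil\right)+\sum_{i=r_2+1}^{n_2}\left\lceil\max_{(x,y)\in\mathcal{P}}y_i-\min_{(x,y)\in\mathcal{P}}y_i\right\rceil$. *)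

(* Defs.v *)
From HB Require Import structures.
From mathcomp Require Import all_boot all_order all_algebra.
From mathcomp Require Import classical_sets reals.
Set Implicit Arguments. Unset Strict Implicit. Unset Printing Implicit Defensive.
Import Order.TTheory GRing.Theory Num.Theory.
Local Open Scope ring_scope.
Local Open Scope classical_set_scope.

(* Vectors are column vectors 'cV[R]_n over an arbitrary real type R
   (the paper uses R = the reals); rational data is embedded by ratr. *)
Section Bilevel.
Variables (R : realType) (n1 n2 m1 m2 r1 r2 : nat).
Variables (d2 : 'cV[rat]_n2)
  (A1 : 'M[rat]_(m1, n1)) (G1 : 'M[rat]_(m1, n2)) (b1 : 'cV[rat]_m1)
  (A2 : 'M[rat]_(m2, n1)) (G2 : 'M[rat]_(m2, n2)) (b2 : 'cV[rat]_m2).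

Definition rmx m n (M : 'M[rat]_(m, n)) : 'M[R]_(m, n) := map_mx ratr M.

Definition nonneg n (v : 'cV[R]_n) : Prop := forall i, 0 <= v i 0.

Definition inX (x : 'cV[R]_n1) : Prop :=
  nonneg x /\ forall i : 'I_n1, (i < r1)%N -> x i 0 \is a Num.int.
Definition inY (y : 'cV[R]_n2) : Prop :=
  nonneg y /\ forall i : 'I_n2, (i < r2)%N -> y i 0 \is a Num.int.

Definition inP1 (x : 'cV[R]_n1) (y : 'cV[R]_n2) : Prop :=
  nonneg y /\ forall i, (rmx b1 - rmx A1 *m x) i 0 <= (rmx G1 *m y) i 0.
Definition inP2 (x : 'cV[R]_n1) (y : 'cV[R]_n2) : Prop :=
  nonneg y /\ forall i, (rmx b2 - rmx A2 *m x) i 0 <= (rmx G2 *m y) i 0.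

Definition Pset : set ('cV[R]_n1 * 'cV[R]_n2) :=
  [set xy | nonneg xy.1 /\ nonneg xy.2 /\ inP1 xy.1 xy.2 /\ inP2 xy.1 xy.2].

Definition Sset : set ('cV[R]_n1 * 'cV[R]_n2) :=
  [set xy | Pset xy /\ inX xy.1 /\ inY xy.2].

Definition Sx (x : 'cV[R]_n1) : set 'cV[R]_n2 :=
  [set y | inY y /\ inP1 x y /\ inP2 x y].

Definition obj2 (y : 'cV[R]_n2) : R := \sum_i ratr (d2 i 0) * y i 0.

Definition Rx (x : 'cV[R]_n1) : set 'cV[R]_n2 :=
  [set y | Sx x y /\ forall yb, Sx x yb -> obj2 y <= obj2 yb].

Definition Fset : set ('cV[R]_n1 * 'cV[R]_n2) :=
  [set xy | inX xy.1 /\ Rx xy.1 xy.2].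

Definition norm1 (y : 'cV[R]_n2) : R := \sum_i `|y i 0|.

Definition Nk (k : int) (y : 'cV[R]_n2) : set 'cV[R]_n2 :=
  [set yb | inY yb /\ norm1 (yb - y) <= k%:~R].

Definition Rxk (x : 'cV[R]_n1) (k : int) : set 'cV[R]_n2 :=
  [set y | Sx x y /\ forall yb, Nk k y yb -> Sx x yb -> obj2 y <= obj2 yb].

Definition Fk (k : int) : set ('cV[R]_n1 * 'cV[R]_n2) :=
  [set xy | inX xy.1 /\ Rxk xy.1 k xy.2].

(* max / min of y_i over P (P is bounded, so these are sup / inf) *)
Definition ymax (i : 'I_n2) : R := sup [set xy.2 i 0 | xy in Pset].
Definition ymin (i : 'I_n2) : R := inf [set xy.2 i 0 | xy in Pset].

Definition kbar : int :=
  \sum_(i < n2 | (i < r2)%N) (Num.floor (ymax i) - Num.ceil (ymin i))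
  + \sum_(i < n2 | ~~ (i < r2)%N) Num.ceil (ymax i - ymin i).

End Bilevel.

(* Main.v *)
Require Import Defs.
From HB Require Import structures.
From mathcomp Require Import all_boot all_order all_algebra.
From mathcomp Require Import classical_sets reals.
From mathcomp Require Import lra.
Import Order.TTheory GRing.Theory Num.Theory.
Local Open Scope ring_scope.
Local Open Scope classical_set_scope.

Theorem theorem1 (R : realType) (n1 n2 m1 m2 r1 r2 : nat)
  (d2 : 'cV[rat]_n2)
  (A1 : 'M[rat]_(m1, n1)) (G1 : 'M[rat]_(m1, n2)) (b1 : 'cV[rat]_m1)
  (A2 : 'M[rat]_(m2, n1)) (G2 : 'M[rat]_(m2, n2)) (b2 : 'cV[rat]_m2)
  (Hr1 : (r1 <= n1)%N) (Hr2 : (r2 <= n2)%N)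
  (* P is bounded *)
  (Hbnd : exists M : R, forall xy, @Pset R n1 n2 m1 m2 A1 G1 b1 A2 G2 b2 xy ->
      (forall i, `|xy.1 i 0| <= M) /\ (forall j, `|xy.2 j 0| <= M))
  (* leader variables appearing in the follower's constraints are integer *)
  (Hlead : forall (i : 'I_m2) (j : 'I_n1), A2 i j != 0 -> (j < r1)%N)
  (* A^2 x + G^2 y - b^2 is integral on S *)
  (Hint : forall xy, @Sset R n1 n2 m1 m2 r1 r2 A1 G1 b1 A2 G2 b2 xy ->
      forall i, (@rmx R _ _ A2 *m xy.1 + @rmx R _ _ G2 *m xy.2 - @rmx R _ _ b2) i 0 \is a Num.int)
  (* d^2 is integral *)
  (Hd2 : forall j, d2 j 0 \is a Num.int) :
  @Sset R n1 n2 m1 m2 r1 r2 A1 G1 b1 A2 G2 b2 = @Fk R n1 n2 m1 m2 r1 r2 d2 A1 G1 b1 A2 G2 b2 0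
  /\ (forall k : nat,
        @Fk R n1 n2 m1 m2 r1 r2 d2 A1 G1 b1 A2 G2 b2 (k.+1)%:Z
        `<=` @Fk R n1 n2 m1 m2 r1 r2 d2 A1 G1 b1 A2 G2 b2 k%:Z)
  /\ @Fk R n1 n2 m1 m2 r1 r2 d2 A1 G1 b1 A2 G2 b2 (@kbar R n1 n2 m1 m2 r2 A1 G1 b1 A2 G2 b2)
     = @Fset R n1 n2 m1 m2 r1 r2 d2 A1 G1 b1 A2 G2 b2.
Proof.
split.
  apply/seteqP; split => -[x y] /=.
    move=> [[nx [ny [p1 p2]]] [iX iY]]; split => //; split; first by [].
    move=> yb [_ Hn] _.
    have -> : yb = y; last by [].
    apply/matrixP => i j; rewrite (ord1 j); apply/eqP; rewrite -subr_eq0 -normr_eq0.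
    apply/eqP/le_anti; rewrite normr_ge0 andbT.
    apply: le_trans Hn; rewrite /norm1 (bigD1 i) //= !mxE lerDl.
    by apply: sumr_ge0 => k _; rewrite normr_ge0.
  move=> [iX [[iY [p1 p2]] _]]; split; last by split.
  by split; [case: iX|split; [case: iY|by split]].
split.
  move=> k [x y] /= [iX [Sy H]]; split => //; split => // yb [iyb Hn] Syb.
  apply: H => //; split => //; apply: le_trans Hn _.
  by rewrite ler_int lez_nat leqnSn.
apply/seteqP; split => -[x y] /= [iX [Sy H]]; split => //; split => //.
  move=> yb Syb; apply: H => //; split; first by case: Syb.
  have PS : forall z, @Sx R n1 n2 m1 m2 r2 A1 G1 b1 A2 G2 b2 x z -> @Pset R n1 n2 m1 m2 A1 G1 b1 A2 G2 b2 (x, z).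
    move=> z [[nz _] [q1 q2]]; split; first by case: iX.
    by split.
  case: Hbnd => M HM.
  have bnd : forall z, @Sx R n1 n2 m1 m2 r2 A1 G1 b1 A2 G2 b2 x z -> forall i,
      inf [set xy.2 i 0 | xy in @Pset R n1 n2 m1 m2 A1 G1 b1 A2 G2 b2] <= z i 0 <=
      sup [set xy.2 i 0 | xy in @Pset R n1 n2 m1 m2 A1 G1 b1 A2 G2 b2].
    move=> z Sz i; apply/andP; split.
      apply: ge_inf; last by exists (x, z) => //; apply: PS.
      exists (- M) => _ [xy Pxy <-].
      by have [_ /(_ i)] := HM _ Pxy; rewrite ler_norml => /andP[].
    apply: ub_le_sup; last by exists (x, z) => //; apply: PS.
    exists M => _ [xy Pxy <-].
    by have [_ /(_ i)] := HM _ Pxy; rewrite ler_norml => /andP[].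
  rewrite /norm1 /kbar /ymax /ymin rmorphD !rmorph_sum /= [X in X <= _](bigID (fun i : 'I_n2 => (i < r2)%N)) /=.
  apply: lerD; apply: ler_sum => i Hi; rewrite !mxE.
    have /andP[l1 u1] := bnd _ Syb i.
    have /andP[l2 u2] := bnd _ Sy i.
    have iyb : yb i 0 \is a Num.int by case: Syb => -[_ +] _; apply.
    have iy : y i 0 \is a Num.int by case: Sy => -[_ +] _; apply.
    set lo := inf _ in l1 l2 *; set hi := sup _ in u1 u2 *.
    have a1 : (Num.ceil lo)%:~R <= yb i 0.
      by rewrite -(floorK iyb) ler_int ceil_le_int floorK.
    have a2 : (Num.ceil lo)%:~R <= y i 0.
      by rewrite -(floorK iy) ler_int ceil_le_int floorK.
    have a3 : yb i 0 <= (Num.floor hi)%:~R.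
      by rewrite -(floorK iyb) ler_int floor_ge_int floorK.
    have a4 : y i 0 <= (Num.floor hi)%:~R.
      by rewrite -(floorK iy) ler_int floor_ge_int floorK.
    rewrite intrB ler_norml; apply/andP; split; lra.
  have /andP[l1 u1] := bnd _ Syb i.
  have /andP[l2 u2] := bnd _ Sy i.
  set lo := inf _ in l1 l2 *; set hi := sup _ in u1 u2 *.
  apply: le_trans (ceil_ge _).
  rewrite ler_norml; apply/andP; split; lra.
move=> yb Nyb Syb; exact: H.
Qed.
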